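(* Let $X$ be an $n\times p$ real matrix, $Z\in\mathbb{R}^n$ a nonzero vector, and $1\le k\le\min(n,p)$. Let $V_kD_kU_k^T$ be the rank-$k$ truncated singular value decomposition of $X$, so that $\widetilde X_k = V_kD_kU_k^T$ is the best rank-$k$ approximation of $X$ in Frobenius norm, and let $P_Z = Z(Z^TZ)^{-1}Z^T$. Let $\widetilde X_{OG} = (I_n-P_Z)V_kD_kU_k^T$ be the reconstruction produced by the orthogonality-to-group (OG) procedure. Then the reconstruction error of the OG procedure is lower bounded by that of $\widetilde X_k$, and the additional error equals $\|P_ZV_kD_k\|_F^2$: $$\|X-\widetilde X_{OG}\|_F^2 = \|X - V_kD_kU_k^T\|_F^2 + \|P_ZV_kD_k\|_F^2 .$$
   Context: $V_k$ ($n\times k$), $D_k$ ($k\times k$ diagonal), $U_k$ ($p\times k$) contain respectively the first $k$ left singular vectors, the $k$ largest singular values, and the first $k$ right singular vectors of $X$. $\|\cdot\|_F$ is the Frobenius norm. *)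

(* Defs.v *)
From HB Require Import structures.
From mathcomp Require Import all_boot all_order all_algebra.
Set Implicit Arguments. Unset Strict Implicit. Unset Printing Implicit Defensive.
Import Order.TTheory GRing.Theory Num.Theory.
Local Open Scope ring_scope.

Definition frob2 (R : realFieldType) (m n : nat) (A : 'M[R]_(m, n)) : R :=
  \sum_(i < m) \sum_(j < n) A i j ^+ 2.

Definition projZ (R : realFieldType) (n : nat) (Z : 'cV[R]_n) : 'M[R]_n :=
  Z *m invmx (Z^T *m Z) *m Z^T.

Definition rdiag (R : realFieldType) (m n : nat) (s : nat -> R) : 'M[R]_(m, n) :=
  \matrix_(i < m, j < n) (if (i : nat) == (j : nat) then s i else 0).

(* Vk (n x k), Dk (k x k, diagonal), Uk (p x k) form a rank-k truncated SVD
   of X: there is a full SVD  X = V D U^T  (V n x n orthogonal, U p x p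
   orthogonal, D n x p rectangular diagonal with nonnegative nonincreasing
   singular values), and Vk, Uk are the first k columns of V, U, and Dk is
   the upper-left k x k block of D (the k largest singular values). *)
Definition trunc_svd (R : realFieldType) (n p k : nat) (X : 'M[R]_(n, p))
    (Vk : 'M[R]_(n, k)) (Dk : 'M[R]_k) (Uk : 'M[R]_(p, k)) : Prop :=
  exists (r q : nat) (V : 'M[R]_(n, k + r)) (U : 'M[R]_(p, k + q)) (s : nat -> R),
    [/\ (k + r)%N = n /\ (k + q)%N = p,
        V^T *m V = 1%:M /\ U^T *m U = 1%:M,
        (forall i, 0 <= s i) /\
        (forall i j, (i <= j)%N -> (j < minn n p)%N -> s j <= s i),
        X = V *m rdiag (k + r) (k + q) s *m U^T
      & [/\ Vk = lsubmx V, Uk = lsubmx U & Dk = ulsubmx (rdiag (k + r) (k + q) s)]].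

(* Main.v *)
Require Import Defs.
From HB Require Import structures.
From mathcomp Require Import all_boot all_order all_algebra.
From mathcomp Require Import ring.
Import Order.TTheory GRing.Theory Num.Theory.
Local Open Scope ring_scope.

Lemma frob2_tr (R : realFieldType) (m n : nat) (A : 'M[R]_(m, n)) :
  frob2 A = \tr (A *m A^T).
Proof.
rewrite /frob2 /mxtrace; apply: eq_bigr => i _; rewrite !mxE.
by apply: eq_bigr => j _; rewrite mxE expr2.
Qed.

Lemma frob2D (R : realFieldType) (m n : nat) (B C : 'M[R]_(m, n)) :
  frob2 (B + C) = frob2 B + frob2 C + 2 * \tr (B *m C^T).
Proof.
rewrite !frob2_tr linearD /= !mulmxDl !mulmxDr !mxtraceD.
have -> : \tr (C *m B^T) = \tr (B *m C^T).
  by rewrite -mxtrace_tr trmx_mul trmxK.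
by rewrite mulr2n mulrDl mul1r; ring.
Qed.

Theorem lemma3 (R : realFieldType) (n p k : nat) (X : 'M[R]_(n, p))
    (Z : 'cV[R]_n) (Vk : 'M[R]_(n, k)) (Dk : 'M[R]_k) (Uk : 'M[R]_(p, k)) :
  Z != 0 -> (1 <= k)%N -> (k <= minn n p)%N ->
  trunc_svd X Vk Dk Uk ->
  frob2 (X - (1%:M - projZ Z) *m Vk *m Dk *m Uk^T)
  = frob2 (X - Vk *m Dk *m Uk^T) + frob2 (projZ Z *m Vk *m Dk).
Proof.
move=> _ _ _ [r [q [V [U [s [_ [_ HU] _ HX [HVk HUk HDk]]]]]]].
set P := projZ Z; set D := rdiag (k + r) (k + q) s.
set M := P *m Vk *m Dk.
have E1 : X - (1%:M - P) *m Vk *m Dk *m Uk^T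
          = (X - Vk *m Dk *m Uk^T) + M *m Uk^T.
  by rewrite /M mulmxBl mul1mx !mulmxBl opprB addrA addrAC.
have HUU : Uk^T *m Uk = 1%:M.
  rewrite HUk trmx_lsub mul_usub_mx mulmx_lsub HU.
  apply/matrixP => i j; rewrite !mxE.
  by rewrite (inj_eq (@lshift_inj _ _)).
have HLD : lsubmx D = col_mx Dk 0.
  apply/matrixP => i j; rewrite HDk !mxE.
  case: splitP => i' ->; rewrite !mxE //=.
  by rewrite eqn_leq [(k + _ <= _)%N]leqNgt (leq_trans (ltn_ord j) (leq_addr _ _)).
have HXU : X *m Uk = Vk *m Dk.
  rewrite HX HUk -!mulmxA mulmx_lsub HU (mulmx_lsub D) mulmx1 HLD.
  by rewrite -[V]hsubmxK mul_row_col mulmx0 addr0 HVk.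
have E2 : (X - Vk *m Dk *m Uk^T) *m Uk = 0.
  by rewrite mulmxBl HXU -(mulmxA (Vk *m Dk)) HUU mulmx1 subrr.
rewrite E1 frob2D.
have -> : \tr ((X - Vk *m Dk *m Uk^T) *m (M *m Uk^T)^T) = 0.
  by rewrite trmx_mul trmxK mulmxA E2 mul0mx linear0.
have -> : frob2 (M *m Uk^T) = frob2 M.
  by rewrite !frob2_tr trmx_mul trmxK !mulmxA -(mulmxA M) HUU mulmx1.
by rewrite mulr0 addr0.
Qed.
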